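(* Let $G$ be a finite, simple, undirected, connected graph that is $C_4$-free, has order $n$, diameter $d$, and edge-connectivity at least $3$. Then $$d\leq \frac{2n-3}{5}.$$
   Context: A graph is $C_4$-free if it contains no cycle of length four as a (not necessarily induced) subgraph. The edge-connectivity of a connected graph is the minimum number of edges whose removal disconnects it. *)

(* Defs.v *)
From mathcomp Require Import all_boot all_order all_algebra.
Set Implicit Arguments. Unset Strict Implicit. Unset Printing Implicit Defensive.

Definition simple_graph (T : finType) (e : rel T) : Prop :=
  symmetric e /\ irreflexive e.

Definition connected_graph (T : finType) (e : rel T) : Prop :=
  forall x y : T, connect e x y.

Definition C4_free (T : finType) (e : rel T) : Prop :=
  forall a b c d : T,
    uniq [:: a; b; c; d] -> ~ [&& e a b, e b c, e c d & e d a].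

Definition remove_edges (T : finType) (e : rel T) (F : {set T * T}) : rel T :=
  fun x y => [&& e x y, (x, y) \notin F & (y, x) \notin F].

(* edge-connectivity >= k: the graph has at least two vertices
   (convention: lambda(K_1) = 0) and deleting fewer than k edges
   never disconnects it. *)
Definition edge_conn_ge (T : finType) (e : rel T) (k : nat) : Prop :=
  1 < #|T| /\
  forall F : {set T * T}, #|F| < k -> forall x y : T, connect (remove_edges e F) x y.

Fixpoint walkb (T : finType) (e : rel T) (k : nat) (x y : T) : bool :=
  match k with
  | 0 => x == y
  | k'.+1 => [exists z, e x z && walkb e k' z y]
  end.

(* distance: least k < #|T| with a walk of length k (correct in a connected
   graph, where every distance is < #|T|) *)
Definition dist (T : finType) (e : rel T) (x y : T) : nat :=
  find (fun k => walkb e k x y) (iota 0 #|T|).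

Definition diameter (T : finType) (e : rel T) : nat :=
  \max_(x : T) \max_(y : T) dist e x y.

(* Main.v *)
Require Import Defs.
From mathcomp Require Import all_boot all_order all_algebra.
From mathcomp Require Import zify lra.
Set Implicit Arguments. Unset Strict Implicit. Unset Printing Implicit Defensive.

Definition htab : seq nat := [:: 100; 100; 100; 100; 100; 100; 100; 100; 100; 100; 100; 100; 100; 100; 100; 3; 5; 7; 100; 100; 100; 5; 7; 9; 100; 100; 100; 100; 9; 11; 100; 100; 100; 100; 100; 13; 100; 100; 100; 100; 100; 100; 100; 2; 2; 3; 5; 7; 100; 1; 3; 5; 7; 9; 100; 2; 4; 6; 8; 10; 100; 4; 6; 8; 10; 12; 100; 6; 8; 10; 12; 14; 100; 100; 1; 3; 5; 7; 100; 0; 2; 4; 6; 8; 0; 2; 4; 6; 8; 10; 0; 2; 4; 6; 8; 10; 2; 4; 6; 8; 10; 12; 4; 6; 8; 10; 12; 14; 100; 100; 1; 3; 5; 7; 100; 1; 3; 5; 7; 9; 1; 3; 5; 7; 9; 11; 2; 4; 6; 8; 10; 12; 4; 6; 8; 10; 12; 14; 6; 8; 10; 12; 14; 16; 100; 100; 3; 5; 7; 9; 100; 3; 5; 7; 9; 11; 3; 5; 7; 9; 11; 13; 5; 7; 9; 11; 13; 15; 6; 8; 10; 12; 14; 16; 8; 10; 12; 14; 16; 18; 100; 100; 5; 7; 9; 11; 100; 5; 7; 9; 11; 13; 5; 7; 9; 11; 13; 15; 7; 9; 11; 13; 15; 17; 9; 11; 13; 15; 17; 19; 10; 12; 14; 16;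 18; 20].
Definition hf (b c x : nat) : nat := nth 100 htab (b.-1 * 36 + c.-1 * 6 + x.-1).

Definition validb (b c x y : nat) : bool :=
  [&& 3 <= x * y, (c == 1) ==> ((x <= y) && ~~ ((x == 3) && (y == 3))),
      (y == 1) ==> (3 <= c) & ((c == 2) && (x == 2)) ==> (7 <= b + y)].

Lemma step_check_b : all (fun b => all (fun c => all (fun x => all (fun y =>
   (hf b c x < 100) ==> validb b c x y ==>
   ((hf c x y < 100) && (hf c x y + 5 <= hf b c x + 2 * y)))
   (iota 1 6)) (iota 1 6)) (iota 1 6)) (iota 1 6).
Proof. by vm_compute. Qed.

Lemma step_check b c x y : 0 < b <= 6 -> 0 < c <= 6 -> 0 < x <= 6 -> 0 < y <= 6 ->
  hf b c x < 100 -> validb b c x y ->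
  hf c x y < 100 /\ hf c x y + 5 <= hf b c x + 2 * y.
Proof.
move=> Hb Hc Hx Hy H1 H2.
have := step_check_b => /allP /(_ b); rewrite mem_iota => /(_ ltac:(lia)).
move=> /allP /(_ c); rewrite mem_iota => /(_ ltac:(lia)).
move=> /allP /(_ x); rewrite mem_iota => /(_ ltac:(lia)).
move=> /allP /(_ y); rewrite mem_iota => /(_ ltac:(lia)).
by rewrite H1 H2 /= => /andP[-> ->].
Qed.

Lemma start_check_b : all (fun c1 => all (fun c2 =>
   [&& 3 <= c1, c1 <= c2 & ~~ ((c1 == 3) && (c2 == 3))] ==>
   ((hf 1 c1 c2 < 100) && (hf 1 c1 c2 + 13 <= 2 * (1 + c1 + c2))))
   (iota 1 6)) (iota 1 6).
Proof. by vm_compute. Qed.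

Lemma start_check c1 c2 : 0 < c1 <= 6 -> 0 < c2 <= 6 -> 3 <= c1 -> c1 <= c2 ->
  ~ (c1 = 3 /\ c2 = 3) ->
  hf 1 c1 c2 < 100 /\ hf 1 c1 c2 + 13 <= 2 * (1 + c1 + c2).
Proof.
move=> H1 H2 H3 H4 H5.
have := start_check_b => /allP /(_ c1); rewrite mem_iota => /(_ ltac:(lia)).
move=> /allP /(_ c2); rewrite mem_iota => /(_ ltac:(lia)).
have -> : [&& 3 <= c1, c1 <= c2 & ~~ ((c1 == 3) && (c2 == 3))].
  by rewrite H3 H4 /=; apply/negP => /andP[/eqP ? /eqP ?]; apply: H5.
by move=> /= /andP[-> ->].
Qed.

Lemma seq_capped (c : nat -> nat) (D : nat) :
  0 < D ->
  c 0 = 1 ->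
  (forall i, i <= D -> 0 < c i <= 6) ->
  (forall i, i < D -> 3 <= c i * c i.+1) ->
  (forall i, i.+2 <= D -> c i = 1 -> c i.+1 <= c i.+2 /\ ~ (c i.+1 = 3 /\ c i.+2 = 3)) ->
  (forall i, i.+2 <= D -> c i.+2 = 1 -> 3 <= c i) ->
  (forall j, j.+3 <= D -> c j.+1 = 2 -> c j.+2 = 2 -> 7 <= c j + c j.+3) ->
  5 * D + 3 <= 2 * \sum_(i < D.+1) c i.
Proof.
move=> D0 c0 cb cP cF cB cC.
have c1 : 3 <= c 1 by have := cP 0 D0; rewrite c0 mul1n.
case: D D0 cb cP cF cB cC => // [] [|D] _ cb cP cF cB cC.
  by rewrite !big_ord_recr /= big_ord0 c0; lia.
have inv : forall j, j <= D ->
   hf (c j) (c j.+1) (c j.+2) < 100 /\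
   5 * j.+2 + 3 + hf (c j) (c j.+1) (c j.+2) <= 2 * \sum_(i < j.+3) c i.
  elim=> [|j IH] Hj.
    have [H1 H2] := cF 0 ltac:(lia) c0.
    have [A B] := start_check (cb 1 ltac:(lia)) (cb 2 ltac:(lia)) c1 H1 H2.
    rewrite c0; split=> //.
    rewrite !big_ord_recr /= big_ord0 c0; lia.
  have [IH1 IH2] := IH ltac:(lia).
  have V : validb (c j) (c j.+1) (c j.+2) (c j.+3).
    apply/and4P; split.
    - exact: cP.
    - apply/implyP => /eqP E; have [X Y] := cF j.+1 ltac:(lia) E.
      by rewrite X /=; apply/negP => /andP[/eqP ? /eqP ?]; apply: Y.
    - by apply/implyP => /eqP E; apply: cB; lia.
    - apply/implyP => /andP[/eqP E1 /eqP E2]; exact: cC.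
  have [S1 S2] := step_check (cb j ltac:(lia)) (cb j.+1 ltac:(lia)) (cb j.+2 ltac:(lia))
                   (cb j.+3 ltac:(lia)) IH1 V.
  split=> //.
  have E : \sum_(i < j.+4) c i = \sum_(i < j.+3) c i + c j.+3 by rewrite big_ord_recr.
  rewrite E; lia.
have [_ H] := inv D (leqnn D).
lia.
Qed.

Lemma seq_main (m : nat -> nat) (D : nat) :
  0 < D ->
  m 0 = 1 ->
  (forall i, i <= D -> 0 < m i) ->
  (forall i, i < D -> 3 <= m i * m i.+1) ->
  (forall i, i.+2 <= D -> m i = 1 -> m i.+1 <= m i.+2 /\ ~ (m i.+1 = 3 /\ m i.+2 = 3)) ->
  (forall i, i.+2 <= D -> m i.+2 = 1 -> 3 <= m i) ->
  (forall j, j.+3 <= D -> m j.+1 = 2 -> m j.+2 = 2 -> 7 <= m j + m j.+3) ->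
  5 * D + 3 <= 2 * \sum_(i < D.+1) m i.
Proof.
move=> D0 m0 mb mP mF mB mC.
pose c i := minn (m i) 6.
have le : \sum_(i < D.+1) c i <= \sum_(i < D.+1) m i.
  by apply: leq_sum => i _; rewrite /c geq_minl.
apply: (leq_trans _ (leq_mul (leqnn 2) le)).
apply: (@seq_capped c) => //.
- by rewrite /c m0.
- move=> i Hi; have := mb i Hi; rewrite /c; lia.
- move=> i Hi; have := mP i Hi; have := mb i ltac:(lia); have := mb i.+1 ltac:(lia).
  rewrite /c /= => A B C.
  have H1 : minn (m i) 6 = m i \/ (minn (m i) 6 = 6 /\ 6 < m i) by lia.
  have H2 : minn (m i.+1) 6 = m i.+1 \/ (minn (m i.+1) 6 = 6 /\ 6 < m i.+1) by lia.
  case: H1 => [X1|[X1 Y1]]; case: H2 => [X2|[X2 Y2]]; rewrite X1 X2; nia.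
- move=> i Hi; rewrite /c => E.
  have E' : m i = 1 by move: E; lia.
  have [X Y] := mF i Hi E'; split; lia.
- move=> i Hi; rewrite /c => E; have := mB i Hi ltac:(lia); lia.
- move=> j Hj; rewrite /c => E1 E2; have := mC j Hj ltac:(lia) ltac:(lia).
  have := mb j ltac:(lia); have := mb j.+3 ltac:(lia); lia.
Qed.

Section Basic.
Variable T : finType.
Variable e : rel T.
Hypothesis esym : symmetric e.
Hypothesis eirr : irreflexive e.
Hypothesis econn : connected_graph e.
Hypothesis c4 : C4_free e.
Hypothesis ec3 : edge_conn_ge e 3.

Lemma edge_neq x y : e x y -> x != y.
Proof. by apply: contraTneq => ->; rewrite eirr. Qed.

Lemma c4' x y p q : x != y -> p != q -> e x p -> e p y -> e x q -> e q y -> False.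
Proof.
move=> xy pq xp py xq qy.
apply: (c4 (a:=x) (b:=p) (c:=y) (d:=q)); last by rewrite xp py (esym y q) qy (esym q x) xq.
have xp' := edge_neq xp; have xq' := edge_neq xq; have py' := edge_neq py; have qy' := edge_neq qy.
rewrite /= !inE !negb_or !andbT.
by rewrite xp' xy xq' py' pq eq_sym qy'.
Qed.

Lemma cut3 (S : {set T}) (F : {set T * T}) a b :
  a \in S -> b \notin S ->
  (forall x y, x \in S -> y \notin S -> e x y -> (x, y) \in F) -> 3 <= #|F|.
Proof.
move=> aS bS HF; rewrite leqNgt; apply/negP => HF3.
have := ec3.2 F HF3 a b => /connectP [p pth bl].
suff : last a p \in S by rewrite -bl (negbTE bS).
elim: p a aS pth {bl} => [|y p IH] x xS //= /andP [rxy pth].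
apply: IH pth; move: rxy; rewrite /remove_edges => /and3P [exy nF _].
by apply: contraNT nF => yS; apply: HF.
Qed.

Lemma walk_path x p : path e x p -> walkb e (size p) x (last x p).
Proof.
elim: p x => [|y p IH] x /=; first by rewrite eqxx.
move=> /andP [exy pth]; apply/existsP; exists y; rewrite exy /=; exact: IH.
Qed.

Lemma walk_exists x y : exists2 k, k < #|T| & walkb e k x y.
Proof.
have := econn x y => /connectP [p pth ->].
case: (shortenP pth) => p' pth' up' _.
exists (size p'); last exact: walk_path.
have E : #|x :: p'| = size (x :: p') by apply/card_uniqP.
by have := max_card (mem (x :: p')); rewrite E.
Qed.

Lemma dist_walk x y : walkb e (dist e x y) x y.
Proof.
have [k kT wk] := walk_exists x y.
rewrite /dist.
have hf : has (fun k => walkb e k x y) (iota 0 #|T|).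
  by apply/hasP; exists k => //; rewrite mem_iota.
have lt : find (fun k => walkb e k x y) (iota 0 #|T|) < #|T|.
  by rewrite -{2}(size_iota 0 #|T|) -has_find.
by have := nth_find 0 hf; rewrite nth_iota.
Qed.

Lemma dist_min x y k : walkb e k x y -> dist e x y <= k.
Proof.
move=> wk; rewrite leqNgt; apply/negP => lt.
have := before_find 0 lt.
have kT : k < #|T|.
  apply: (leq_trans lt); rewrite /dist.
  by have := find_size (fun k => walkb e k x y) (iota 0 #|T|); rewrite size_iota.
by rewrite nth_iota // add0n wk.
Qed.

Lemma esym_sym x y : e x y -> e y x.
Proof. by rewrite esym. Qed.

Lemma dist_edge v x y : e x y -> dist e y v <= (dist e x v).+1.
Proof.
move=> exy; apply: dist_min => /=; apply/existsP; exists x.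
by rewrite esym exy dist_walk.
Qed.

Lemma dist_pred v x : 0 < dist e x v -> exists2 z, e x z & dist e z v = (dist e x v).-1.
Proof.
have := dist_walk x v; case E: (dist e x v) => // [k] /= /existsP [z /andP [xz wz]] _.
exists z => //; apply/eqP; rewrite eqn_leq dist_min //=.
have := dist_edge v (esym_sym xz); rewrite E; lia.
Qed.

Lemma dist0 v x : (dist e x v == 0) = (x == v).
Proof.
apply/eqP/eqP => [H|->]; first by have := dist_walk x v; rewrite H => /eqP.
by apply/eqP; rewrite -leqn0; apply: dist_min => /=.
Qed.

End Basic.

Section Layers.
Variable T : finType.
Variable e : rel T.
Hypothesis esym : symmetric e.
Hypothesis eirr : irreflexive e.
Hypothesis econn : connected_graph e.
Hypothesis c4 : C4_free e.
Hypothesis ec3 : edge_conn_ge e 3.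
Variables v w : T.
Hypothesis dmax : forall x, dist e x v <= dist e w v.

Local Notation ds x := (dist e x v).
Local Notation D := (dist e w v).
Definition Ly i := [set x | dist e x v == i].
Definition Nb x := [set y | e x y].

Lemma inLy i x : (x \in Ly i) = (ds x == i).
Proof. by rewrite inE. Qed.
Lemma inNb x y : (y \in Nb x) = e x y.
Proof. by rewrite inE. Qed.

Lemma ds_edge x y : e x y -> ds y <= (ds x).+1 /\ ds x <= (ds y).+1.
Proof. by move=> exy; split; apply: dist_edge => //; rewrite esym. Qed.

Lemma ds_pred x : 0 < ds x -> exists2 z, e x z & ds z = (ds x).-1.
Proof. exact: dist_pred. Qed.

Lemma ds0 x : (ds x == 0) = (x == v).
Proof. exact: dist0. Qed.

Lemma Ly_nonempty i : i <= D -> exists x, ds x = i.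
Proof.
move=> iD; have [k Ek] : exists k, k + i = D by exists (D - i); lia.
elim: k i Ek {iD} => [|k IH] i Ek; first by exists w; rewrite -Ek.
have [x dx] := IH i.+1 ltac:(lia).
have [z _ dz] := ds_pred (x:=x) ltac:(lia).
by exists z; rewrite dz dx.
Qed.

Lemma card_Ly_pos i : i <= D -> 0 < #|Ly i|.
Proof. by move=> /Ly_nonempty [x dx]; apply/card_gt0P; exists x; rewrite inLy dx. Qed.

Lemma Ly0 : Ly 0 = [set v].
Proof. by apply/setP => x; rewrite inLy in_set1 ds0. Qed.

Lemma sum_Ly : \sum_(i < D.+1) #|Ly i| = #|T|.
Proof.
have E : forall i, #|Ly i| = \sum_(x : T) (ds x == i : nat).
  by move=> i; rewrite -sum1_card big_mkcond /=; apply: eq_bigr => x _; rewrite inLy; case: (_ == _).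
under eq_bigr => i _ do rewrite E.
rewrite exchange_big /= -sum1_card.
apply: eq_bigr => x _.
have xD : ds x < D.+1 by have := dmax x; lia.
rewrite (bigD1 (Ordinal xD)) //= eqxx big1 // => i /negP ne.
by case: eqP => // E'; exfalso; apply: ne; apply/eqP; apply: val_inj => /=.
Qed.

Lemma exists_other (x : T) : exists y : T, y != x.
Proof.
have := ec3.1 => /card_gt1P [a [b [_ _ ab]]].
by case: (eqVneq a x) => [E|ax]; [exists b; rewrite -E eq_sym | exists a].
Qed.

Lemma deg3 x : 3 <= #|Nb x|.
Proof.
have [y yx] := exists_other x.
have := cut3 ec3 (S := [set x]) (F := setX [set x] (Nb x)) (a:=x) (b:=y).
rewrite cardsX cards1 mul1n; apply; first by rewrite in_set1.
  by rewrite in_set1.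
by move=> a b; rewrite !in_set1 => /eqP -> _ exb; rewrite in_setX in_set1 eqxx inNb.
Qed.

Lemma prod3 i : i < D -> 3 <= #|Ly i| * #|Ly i.+1|.
Proof.
move=> iD.
have := cut3 ec3 (S := [set x | ds x <= i]) (F := setX (Ly i) (Ly i.+1)) (a:=v) (b:=w).
rewrite cardsX; apply.
- by rewrite inE; have := ds0 v; rewrite eqxx => /eqP ->.
- by rewrite inE -ltnNge.
- move=> x y; rewrite !inE -ltnNge => xi iy exy.
  have [h1 h2] := ds_edge exy.
  apply/andP; split; apply/eqP; rewrite /=; lia.
Qed.


Lemma two_le (A : {set T}) x y : x \in A -> y \in A -> x != y -> 1 < #|A|.
Proof. by move=> xA yA xy; apply/card_gt1P; exists x, y. Qed.

Lemma le1_eq (A : {set T}) x y : #|A| <= 1 -> x \in A -> y \in A -> x = y.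
Proof. by move=> /card_le1_eqP H xA yA; apply: H. Qed.

Lemma cardU_le (A B : {set T}) : #|A :|: B| <= #|A| + #|B|.
Proof. by rewrite cardsU leq_subr. Qed.

Lemma cardU_disj (A B : {set T}) : A :&: B = set0 -> #|A :|: B| = #|A| + #|B|.
Proof. by move=> H; rewrite cardsU H cards0 subn0. Qed.

Lemma cardUP_le (A B : {set T * T}) : #|A :|: B| <= #|A| + #|B|.
Proof. by rewrite cardsU leq_subr. Qed.

Lemma cn x y p q : x != y -> e x p -> e x q -> e y p -> e y q -> p = q.
Proof.
move=> xy xp xq yp yq; apply/eqP; apply/negP => /negP pq.
by apply: (c4' esym eirr c4 xy pq xp _ xq); rewrite esym.
Qed.

Lemma ds_neq x y : ds x != ds y -> x != y.
Proof. by apply: contraNneq => ->. Qed.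

Lemma pick_in (A : {set T}) x0 : 0 < #|A| -> odflt x0 [pick y in A] \in A.
Proof.
case: pickP => [y Hy|H] //= /card_gt0P [y Hy].
by have := H y; rewrite Hy.
Qed.

Lemma no_pm3 (X : {set T}) : #|X| = 3 -> (forall x, x \in X -> #|Nb x :&: X| = 1) -> False.
Proof.
move=> X3 H.
have [x1 x1X] : exists x, x \in X by apply/card_gt0P; rewrite X3.
have /eqP/cards1P [y1 Ey1] := H x1 x1X.
have : y1 \in Nb x1 :&: X by rewrite Ey1 set11.
rewrite in_setI inNb => /andP [xy1 y1X].
have x1y1 := edge_neq eirr xy1.
have D1 : #|X :\: [set x1; y1]| = 1.
  rewrite cardsD (setIidPr _) ?cards2 ?x1y1 ?X3 //.
  by apply/subsetP => z; rewrite !inE => /orP [] /eqP ->.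
have [z zD] : exists z, z \in X :\: [set x1; y1] by apply/card_gt0P; rewrite D1.
move: (zD); rewrite !inE negb_or => /andP [/andP [zx1 zy1] zX].
have /eqP/cards1P [t Et] := H z zX.
have : t \in Nb z :&: X by rewrite Et set11.
rewrite in_setI inNb => /andP [zt tX].
case: (eqVneq t x1) => [tx1|tx1].
  have := H x1 x1X => E1.
  have := two_le (A := Nb x1 :&: X) (x := y1) (y := z).
  subst t; rewrite !in_setI !inNb xy1 y1X zX esym zt E1 => /(_ isT isT).
  by rewrite eq_sym zy1 => /(_ isT).
case: (eqVneq t y1) => [ty1|ty1].
  have := H y1 y1X => E1.
  have := two_le (A := Nb y1 :&: X) (x := x1) (y := z).
  subst t; rewrite !in_setI !inNb esym xy1 x1X zX esym zt E1 => /(_ isT isT).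
  by rewrite eq_sym zx1 => /(_ isT).
have := two_le (A := X :\: [set x1; y1]) (x := z) (y := t) zD.
rewrite D1 !inE negb_or tx1 ty1 tX (edge_neq eirr zt) => /(_ isT isT).
by [].
Qed.

Lemma nb_layers x y : e x y -> ds y <= (ds x).+1 /\ ds x <= (ds y).+1.
Proof. exact: ds_edge. Qed.

Lemma fwd i : i.+2 <= D -> #|Ly i| = 1 ->
  #|Ly i.+1| <= #|Ly i.+2| /\ ~ (#|Ly i.+1| = 3 /\ #|Ly i.+2| = 3).
Proof.
move=> iD /eqP /cards1P [u Lu].
have : u \in Ly i by rewrite Lu set11.
rewrite inLy => /eqP du.
have adj : forall x, x \in Ly i.+1 -> e x u.
  move=> x; rewrite inLy => /eqP dx.
  have [z xz dz] := ds_pred (x:=x) ltac:(lia).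
  have : z \in Ly i by rewrite inLy dz dx.
  by rewrite Lu in_set1 => /eqP <-.
have xu : forall x, x \in Ly i.+1 -> x != u.
  by move=> x; rewrite inLy => /eqP dx; apply: ds_neq; rewrite dx du; lia.
have in1 : forall x, x \in Ly i.+1 -> #|Nb x :&: Ly i.+1| <= 1.
  move=> x xL; apply/card_le1_eqP => y1 y2; rewrite !in_setI !inNb => /andP [xy1 y1L] /andP [xy2 y2L].
  by apply: (cn (xu x xL) xy2 xy1); rewrite esym; apply: adj.
have split3 : forall x, x \in Ly i.+1 ->
    3 <= 1 + #|Nb x :&: Ly i.+1| + #|Nb x :&: Ly i.+2|.
  move=> x xL; apply: (leq_trans (deg3 x)).
  apply: (@leq_trans #|([set u] :|: (Nb x :&: Ly i.+1)) :|: (Nb x :&: Ly i.+2)|); last first.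
    apply: (leq_trans (cardU_le _ _)); rewrite leq_add2r.
    by apply: (leq_trans (cardU_le _ _)); rewrite cards1.
  apply: subset_leq_card.
  apply/subsetP => y; rewrite inNb => xy.
  move: (xL); rewrite inLy => /eqP dx; have [k1 k2] := nb_layers xy.
  rewrite !inE xy /=.
  have : ds y = i \/ ds y = i.+1 \/ ds y = i.+2 by lia.
  case=> [dy|[dy|dy]]; last 2 first.
  - by rewrite dy eqxx !orbT.
  - by rewrite dy eqxx !orbT.
  have : y \in Ly i by rewrite inLy dy.
  by rewrite Lu in_set1 => ->.
pose f x := odflt x [pick y in Nb x :&: Ly i.+2].
have fP : forall x, x \in Ly i.+1 -> f x \in Nb x :&: Ly i.+2.
  move=> x xL; apply: pick_in; have := split3 x xL; have := in1 x xL; lia.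
have finj : {in Ly i.+1 &, injective f}.
  move=> x1 x2 x1L x2L E; apply/eqP; apply/negP => /negP ne.
  have := fP x1 x1L; have := fP x2 x2L; rewrite -E !in_setI !inNb.
  move=> /andP [x2f fL] /andP [x1f _].
  have := cn ne (adj x1 x1L) x1f (adj x2 x2L) x2f => uf.
  by move: fL; rewrite inLy -uf du; lia.
have card1 : #|Ly i.+1| = #|f @: Ly i.+1| by rewrite card_in_imset.
have sub : f @: Ly i.+1 \subset Ly i.+2.
  apply/subsetP => q /imsetP [x xL ->]; have := fP x xL; rewrite in_setI => /andP [].
  done.
split; first by rewrite card1; apply: subset_leq_card.
move=> [n1 n2].
have Eim : f @: Ly i.+1 = Ly i.+2.
  by apply/eqP; rewrite eqEcard sub -card1 n1 n2.
apply: (@no_pm3 (Ly i.+1) n1) => x xL.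
have le2 : #|Nb x :&: Ly i.+2| <= 1.
  apply/card_le1_eqP => q1 q2.
  suff K : forall q, q \in Nb x :&: Ly i.+2 -> q = f x.
    by move=> /K -> /K ->.
  move=> q; rewrite in_setI inNb => /andP [xq].
  rewrite -Eim => /imsetP [x' x'L qE].
  case: (eqVneq x x') => [E|ne]; first by rewrite qE E.
  have := fP x' x'L; rewrite -qE in_setI inNb => /andP [x'q qL].
  have := cn ne (adj x xL) xq (adj x' x'L) x'q => uq.
  by move: qL; rewrite inLy -uq du; lia.
have := split3 x xL; have := in1 x xL; lia.
Qed.

Lemma ds_v : ds v = 0.
Proof. by apply/eqP; rewrite ds0. Qed.

Lemma bwd i : i.+2 <= D -> #|Ly i.+2| = 1 -> 3 <= #|Ly i|.
Proof.
move=> iD /eqP /cards1P [u Lu].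
have : u \in Ly i.+2 by rewrite Lu set11.
rewrite inLy => /eqP du.
pose P := Nb u :&: Ly i.+1.
have P3 : 3 <= #|P|.
  have := cut3 ec3 (S := [set x | ds x <= i.+1]) (F := setX P [set u]) (a:=v) (b:=u).
  rewrite cardsX cards1 muln1; apply.
  - by rewrite inE ds_v.
  - by rewrite inE du ltnn.
  - move=> x y; rewrite !inE -ltnNge => xi iy exy.
    have [k1 k2] := nb_layers exy.
    have : y \in Ly i.+2 by rewrite inLy; apply/eqP; lia.
    rewrite Lu in_set1 => /eqP yu; subst y.
    by rewrite eqxx andbT esym exy /=; apply/eqP; lia.
pose g p := odflt p [pick z in Nb p :&: Ly i].
have gP : forall p, p \in Ly i.+1 -> g p \in Nb p :&: Ly i.
  move=> p; rewrite inLy => /eqP dp; apply: pick_in.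
  have [z pz dz] := ds_pred (x:=p) ltac:(lia).
  by apply/card_gt0P; exists z; rewrite in_setI inNb pz inLy dz dp /= eqxx.
have ginj : {in P &, injective g}.
  move=> p1 p2; rewrite !in_setI !inNb => /andP [up1 p1L] /andP [up2 p2L] E.
  apply/eqP; apply/negP => /negP ne.
  have := gP p1 p1L; have := gP p2 p2L; rewrite -E !in_setI !inNb.
  move=> /andP [p2g gL] /andP [p1g _].
  have := cn ne (esym_sym esym up1) p1g (esym_sym esym up2) p2g => ug.
  by move: gL; rewrite inLy -ug du; lia.
apply: (leq_trans P3); rewrite -(card_in_imset ginj); apply: subset_leq_card.
apply/subsetP => q /imsetP [p pP ->].
move: pP; rewrite in_setI => /andP [_ pL].
by have := gP p pL; rewrite in_setI => /andP [].
Qed.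

Lemma mem_two (A : {set T}) a a' y : #|A| = 2 -> a \in A -> a' \in A -> a != a' ->
  y \in A -> y = a \/ y = a'.
Proof.
move=> A2 aA a'A aa' yA.
case: (eqVneq y a) => [->|ya]; first by left.
right; apply: (@le1_eq (A :\ a)).
- by rewrite cardsD (setIidPr _) ?sub1set // cards1 A2.
- by rewrite !inE ya yA.
- by rewrite !inE eq_sym aa' a'A.
Qed.

Lemma cardsX1 (A : {set T}) (x : T) : #|setX A [set x]| = #|A|.
Proof. by rewrite cardsX cards1 muln1. Qed.
Lemma cards1X (A : {set T}) (x : T) : #|setX [set x] A| = #|A|.
Proof. by rewrite cardsX cards1 mul1n. Qed.


Ltac is_arith P := lazymatch P with
  | is_true (leq _ _) => idtac
  | is_true (~~ leq _ _) => idtac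
  | @eq ?t _ _ => unify t nat
  | is_true (~~ (@eq_op _ (nat_of_ord _) _)) => fail
  | is_true (~~ (@eq_op _ _ _)) => idtac
  | is_true (@eq_op _ _ _) => idtac
  | ~ _ => idtac
  | _ => fail
  end.
Ltac prune := repeat match goal with H : ?P |- _ =>
  tryif is_arith P then fail else clear H end.
Ltac clia := prune; lia.

Lemma mid j : j.+3 <= D -> #|Ly j.+1| = 2 -> #|Ly j.+2| = 2 -> 7 <= #|Ly j| + #|Ly j.+3|.
Proof.
move=> jD A2 B2.
have dw : ds w = D by [].
have key : exists a a', [/\ a \in Ly j.+1, a' \in Ly j.+1, a != a',
     (forall b, b \in Ly j.+2 -> e a b) & 0 < #|Nb a' :&: Ly j.+2|].
  have /eqP /cards2P [a1 [a2 [a12 EA]]] := A2.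
  have a1A : a1 \in Ly j.+1 by rewrite EA !inE eqxx.
  have a2A : a2 \in Ly j.+1 by rewrite EA !inE eqxx orbT.
  have cutAB : 3 <= #|Nb a1 :&: Ly j.+2| + #|Nb a2 :&: Ly j.+2|.
    have := cut3 ec3 (S := [set x | ds x <= j.+1])
      (F := setX [set a1] (Nb a1 :&: Ly j.+2) :|: setX [set a2] (Nb a2 :&: Ly j.+2)) (a:=v) (b:=w).
    move=> H; apply: (leq_trans _ (leq_trans (cardUP_le _ _) _)); first apply: H.
    - by rewrite inE ds_v.
    - by rewrite inE -ltnNge; clia.
    - move=> x y; rewrite !inE -ltnNge => xi iy exy.
      have [k1 k2] := nb_layers exy.
      have xA : x \in Ly j.+1 by rewrite inLy; apply/eqP; clia.
      have dy : ds y = j.+2 by clia.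
      move: xA; rewrite EA !inE => /orP [] /eqP E; subst x; rewrite eqxx dy eqxx /= ?andbT.
      + by rewrite exy.
      + by rewrite exy orbT.
    by rewrite !cards1X.
  have le2 : forall x, #|Nb x :&: Ly j.+2| <= 2.
    by move=> x; rewrite -B2; apply: subset_leq_card; apply: subsetIr.
  have full : forall x, #|Nb x :&: Ly j.+2| = 2 -> forall b, b \in Ly j.+2 -> e x b.
    move=> x Hx b bB.
    have : Nb x :&: Ly j.+2 = Ly j.+2.
      by apply/eqP; rewrite eqEcard subsetIr Hx B2.
    by move/setP => /(_ b); rewrite in_setI inNb bB andbT => ->.
  case: (eqVneq #|Nb a1 :&: Ly j.+2| 2) => [H1|H1].
    exists a1, a2; split=> //; first exact: full.
    by have := le2 a1; clia.
  exists a2, a1; split=> //; first by rewrite eq_sym.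
    apply: full; have := le2 a1; have := le2 a2; clia.
  by have := le2 a1; have := le2 a2; clia.
have [a [a' [aA a'A aa' aB a'B]]] := key.
have [b0 b0i] : exists b0, b0 \in Nb a' :&: Ly j.+2 by apply/card_gt0P.
move: b0i; rewrite in_setI inNb => /andP [a'b0 b0B].
have [b1 b1i] : exists b1, b1 \in Ly j.+2 :\ b0.
  by apply/card_gt0P; rewrite cardsD (setIidPr _) ?sub1set // cards1 B2.
move: b1i; rewrite !inE => /andP [b10 b1B]; rewrite -inLy in b1B.
have memA y : ds y = j.+1 -> y = a \/ y = a'.
  by move=> dy; apply: (mem_two A2 aA a'A aa'); rewrite inLy dy.
have memB y : ds y = j.+2 -> y = b0 \/ y = b1.
  by move=> dy; apply: (mem_two B2 b0B b1B); [rewrite eq_sym | rewrite inLy dy].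
move: aA a'A b0B b1B; rewrite !inLy => /eqP da /eqP da' /eqP db0 /eqP db1.
have ab0 := aB b0 ltac:(by rewrite inLy db0).
have ab1 := aB b1 ltac:(by rewrite inLy db1).
have b01 : b0 != b1 by rewrite eq_sym.
have na'b1 : ~~ e a' b1.
  apply/negP => a'b1.
  by have := cn aa' ab0 ab1 a'b0 a'b1; apply/eqP.
pose al x := #|Nb x :&: Ly j|.
pose be x := #|Nb x :&: Ly j.+3|.
have nA : al a + al a' <= #|Ly j|.
  rewrite /al -cardU_disj; first by apply: subset_leq_card; rewrite -setIUl subsetIr.
  apply/setP => z; rewrite !inE; apply/negP => /andP [/andP [az zj] /andP [a'z _]].
  have := cn aa' az ab0 a'z a'b0 => zb0.
  by move: zj; rewrite zb0 db0; clia.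
have nB : be b0 + be b1 <= #|Ly j.+3|.
  rewrite /be -cardU_disj; first by apply: subset_leq_card; rewrite -setIUl subsetIr.
  apply/setP => z; rewrite !inE; apply/negP => /andP [/andP [b0z zj] /andP [b1z _]].
  have := cn b01 b0z (esym_sym esym ab0) b1z (esym_sym esym ab1) => za.
  by move: zj; rewrite za da; clia.
have cA : 3 <= al a + al a'.
  have := cut3 ec3 (S := [set x | ds x <= j])
      (F := setX (Nb a :&: Ly j) [set a] :|: setX (Nb a' :&: Ly j) [set a']) (a:=v) (b:=w).
  move=> H; apply: (leq_trans _ (leq_trans (cardUP_le _ _) _)); first apply: H.
  - by rewrite inE ds_v.
  - by rewrite inE -ltnNge; clia.
  - move=> x y; rewrite !inE -ltnNge => xi iy exy.
    have [k1 k2] := nb_layers exy.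
    have dx : ds x = j by clia.
    have eyx := esym_sym esym exy.
    by case: (memA y ltac:(clia)) => E; subst y; rewrite eyx dx !eqxx /= ?orbT.
  by rewrite !cardsX1.
have cB : 3 <= be b0 + be b1.
  have := cut3 ec3 (S := [set x | ds x <= j.+2])
      (F := setX [set b0] (Nb b0 :&: Ly j.+3) :|: setX [set b1] (Nb b1 :&: Ly j.+3)) (a:=v) (b:=w).
  move=> H; apply: (leq_trans _ (leq_trans (cardUP_le _ _) _)); first apply: H.
  - by rewrite inE ds_v.
  - by rewrite inE -ltnNge; clia.
  - move=> x y; rewrite !inE -ltnNge => xi iy exy.
    have [k1 k2] := nb_layers exy.
    have dy : ds y = j.+3 by clia.
    by case: (memB x ltac:(clia)) => E; subst x; rewrite exy dy !eqxx /= ?orbT.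
  by rewrite !cards1X.
have notboth : ~ (e a a' /\ e b0 b1).
  move=> [aa'e b01e].
  have := cn (ds_neq (x:=a) (y:=b0) ltac:(rewrite da db0; clia)) aa'e ab1 (esym_sym esym a'b0) b01e.
  by move=> E; move: da'; rewrite E db1; clia.
have caseA : ~~ e a a' -> 4 <= #|Ly j|.
  move=> naa'.
  have h1 : 2 <= al a'.
    have := deg3 a' => dg.
    have sub : Nb a' \subset (Nb a' :&: Ly j) :|: [set b0].
      apply/subsetP => y; rewrite inNb => a'y; rewrite !inE a'y /=.
      have [k1 k2] := nb_layers a'y.
      have : ds y = j \/ ds y = j.+1 \/ ds y = j.+2 by clia.
      case=> [->|[dy|dy]]; first by rewrite eqxx.
      - case: (memA y dy) => E; subst y; first by rewrite esym a'y in naa'.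
        by rewrite eirr in a'y.
      - case: (memB y dy) => E; subst y; first by rewrite eqxx orbT.
        by rewrite a'y in na'b1.
    have := subset_leq_card sub; have := cardU_le (Nb a' :&: Ly j) [set b0].
    rewrite cards1 /al; clia.
  have h2 : 2 <= al a.
    suff K : 3 <= #|setX (Nb a :&: Ly j) [set a] :|: setX [set a'] [set b0]|.
      by have := leq_trans K (cardUP_le _ _); rewrite cardsX1 cards1X cards1 /al; clia.
    apply: (cut3 ec3 (S := [set x | ds x <= j] :|: [set a']) (a:=v) (b:=w)).
    - by rewrite !inE ds_v.
    - rewrite !inE negb_or -ltnNge; apply/andP; split; first clia.
      by apply: ds_neq; rewrite da'; clia.
    - move=> x y; rewrite !inE !negb_or -ltnNge => /orP [xi|/eqP xa'] /andP [iy ya'] exy.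
        have [k1 k2] := nb_layers exy.
        have dx : ds x = j by clia.
        case: (memA y ltac:(clia)) => E; subst y; last by rewrite eqxx in ya'.
        by rewrite eqxx esym exy dx eqxx.
      subst x; have [k1 k2] := nb_layers exy.
      have : ds y = j.+1 \/ ds y = j.+2 by clia.
      case=> [dy|dy].
        case: (memA y dy) => E; subst y; first by rewrite esym exy in naa'.
        by rewrite eqxx in ya'.
      case: (memB y dy) => E; subst y; first by rewrite !eqxx orbT.
      by rewrite exy in na'b1.
  by have := nA; rewrite /al in h1 h2 *; clia.
have caseB : ~~ e b0 b1 -> 4 <= #|Ly j.+3|.
  move=> nb01.
  have h1 : 2 <= be b1.
    have := deg3 b1 => dg.
    have sub : Nb b1 \subset [set a] :|: (Nb b1 :&: Ly j.+3).
      apply/subsetP => y; rewrite inNb => b1y; rewrite !inE b1y /=.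
      have [k1 k2] := nb_layers b1y.
      have : ds y = j.+1 \/ ds y = j.+2 \/ ds y = j.+3 by clia.
      case=> [dy|[dy|->]]; last by rewrite eqxx orbT.
      - case: (memA y dy) => E; subst y; first by rewrite eqxx.
        by rewrite esym b1y in na'b1.
      - case: (memB y dy) => E; subst y; first by rewrite esym b1y in nb01.
        by rewrite eirr in b1y.
    have := subset_leq_card sub; have := cardU_le [set a] (Nb b1 :&: Ly j.+3).
    rewrite cards1 /be; clia.
  have h2 : 2 <= be b0.
    suff K : 3 <= #|setX [set a] [set b1] :|: setX [set b0] (Nb b0 :&: Ly j.+3)|.
      by have := leq_trans K (cardUP_le _ _); rewrite cardsX1 cards1X cards1 /be; clia.
    apply: (cut3 ec3 (S := [set x | ds x <= j.+1] :|: [set b0]) (a:=v) (b:=w)).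
    - by rewrite !inE ds_v.
    - rewrite !inE negb_or -ltnNge; apply/andP; split; first clia.
      by apply: ds_neq; rewrite db0; clia.
    - move=> x y; rewrite !inE !negb_or -ltnNge => /orP [xi|/eqP xb0] /andP [iy yb0] exy.
        have [k1 k2] := nb_layers exy.
        have dx : ds x = j.+1 by clia.
        case: (memB y ltac:(clia)) => E; subst y; first by rewrite eqxx in yb0.
        case: (memA x dx) => E; subst x; first by rewrite !eqxx.
        by rewrite exy in na'b1.
      subst x; have [k1 k2] := nb_layers exy.
      have : ds y = j.+2 \/ ds y = j.+3 by clia.
      case=> [dy|dy].
        case: (memB y dy) => E; subst y; first by rewrite eqxx in yb0.
        by rewrite exy in nb01.
      by rewrite exy dy !eqxx orbT.
  by have := nB; rewrite /be in h1 h2 *; clia.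
have := nA; have := nB; rewrite /al /be in cA cB *.
case: (boolP (e a a')) => [aa'e|naa'].
  case: (boolP (e b0 b1)) => [b01e|nb01]; first by exfalso; apply: notboth.
  have := caseB nb01; clia.
have := caseA naa'; clia.
Qed.

Lemma main_bound : 5 * D + 3 <= 2 * #|T|.
Proof.
have D0 : 0 < D.
  have [x xv] := exists_other v.
  have := dmax x; have : dist e x v != 0 by rewrite ds0.
  clia.
rewrite -sum_Ly.
apply: (@seq_main (fun i => #|Ly i|)) => //.
- by rewrite Ly0 cards1.
- by move=> i iD; apply: card_Ly_pos.
- by move=> i iD; apply: prod3.
- by move=> i iD; apply: fwd.
- by move=> i iD; apply: bwd.
- by move=> i iD; apply: mid.
Qed.

End Layers.

Import Order.TTheory GRing.Theory Num.Theory.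
Local Open Scope ring_scope.

Theorem theorem1 (T : finType) (e : rel T) :
  simple_graph e -> connected_graph e -> C4_free e -> edge_conn_ge e 3 ->
  ((diameter e)%:R : rat) <= (2 * (#|T|)%:R - 3) / 5.
Proof.
move=> [Hs Hi] Hc H4 H3.
have [x0 _] : exists x : T, true.
  by have := H3.1 => /card_gt1P [a [_ [_ _ _]]]; exists a.
set F := fun x => (\max_(y : T) dist e x y)%N.
have [w Ew] : exists w, (\max_(x : T) F x = F w)%N.
  by eexists; apply: (@bigop.bigmax_eq_arg T x0 xpredT F).
have [v Ev] : exists v, (\max_(y : T) dist e w y = dist e w v)%N.
  by eexists; apply: (@bigop.bigmax_eq_arg T x0 xpredT (fun y => dist e w y)).
have dmax : forall x, (dist e x v <= dist e w v)%N.
  move=> x; rewrite -Ev -/(F w) -Ew.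
  apply: (@leq_trans (F x)); last by apply: bigop.leq_bigmax.
  rewrite /F; by apply: (@bigop.leq_bigmax T (fun y => dist e x y) v).
have Dd : diameter e = dist e w v by rewrite /diameter Ew /F Ev.
have := main_bound Hs Hi Hc H4 H3 dmax.
rewrite Dd => H.
rewrite ler_pdivlMr //.
have : ((5 * dist e w v + 3)%N%:R <= (2 * #|T|)%N%:R :> rat) by rewrite ler_nat.
rewrite natrD !natrM.
move: (dist e w v)%:R (#|T|)%:R => a b; lra.
Qed.
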